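(* Let $\Sigma\subseteq\Delta\subseteq\mathcal L_\Diamond$ be closed under subformulas with $\Sigma$ finite, let $\mathcal W$ be a finite $\Sigma$-labelled frame, let $\mathcal X$ be a $\Delta$-labelled frame, and let $w\in|\mathcal W|$, $x\in|\mathcal X|$. Then: (1) if $\mathrm{Sim}(w)\in\ell^-_{\mathcal X}(x)$, then there is $y\succcurlyeq x$ such that $(\mathcal W,w)\rightharpoonup(\mathcal X,y)$; (2) if there is $y\succcurlyeq x$ such that $(\mathcal W,w)\rightharpoonup(\mathcal X,y)$, then $\mathrm{Sim}(w)\notin\ell^+_{\mathcal X}(x)$. In particular, if $\Delta=\mathcal L_\Diamond$, then $\mathrm{Sim}(w)\in\ell^-_{\mathcal X}(x)$ if and only if there is $y\succcurlyeq x$ with $(\mathcal W,w)\rightharpoonup(\mathcal X,y)$.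
   Context: $\mathcal L_\Diamond$ is the propositional language with $\bot,\wedge,\vee,\to$ and unary modalities $\bigcirc$, $\Diamond$. For $\Sigma$ closed under subformulas, a $\Sigma$-type is a pair $\Phi=(\Phi^-;\Phi^+)$ of subsets of $\Sigma$ with: $\Phi^-\cap\Phi^+=\varnothing$; $\Phi^-\cup\Phi^+=\Sigma$; $\bot\notin\Phi^+$; for $\varphi\wedge\psi\in\Sigma$, $\varphi\wedge\psi\in\Phi^+$ iff $\varphi,\psi\in\Phi^+$; for $\varphi\vee\psi\in\Sigma$, $\varphi\vee\psi\in\Phi^+$ iff $\varphi\in\Phi^+$ or $\psi\in\Phi^+$; if $\varphi\to\psi\in\Phi^+$ then $\varphi\in\Phi^-$ or $\psi\in\Phi^+$; if $\Diamond\varphi\in\Phi^-$ then $\varphi\in\Phi^-$. $\Phi\preccurlyeq_T\Psi$ iff $\Phi^+\subseteq\Psi^+$; for a $\Sigma$-type $\Phi$ and $\Delta$-type $\Psi$ ($\Sigma\subseteq\Delta$), $\Phi\subseteq_T\Psi$ iff $\Phi^-\subseteq\Psi^-$ and $\Phi^+\subseteq\Psi^+$. A $\Sigma$-labelled frame is $(W,\preccurlyeq,\ell)$ with $\preccurlyeq$ a partial order on $W$, $\ell$ mapping $W$ to $\Sigma$-types, $w\preccurlyeq v\Rightarrow\ell(w)\preccurlyeq_T\ell(v)$, and whenever $\varphi\to\psi\in\ell^-(w)$ there is $v\succcurlyeq w$ with $\varphi\in\ell^+(v)$, $\psi\in\ell^-(v)$. A simulation between a $\Sigma$-labelled frame $\mathcal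 X$ and a $\Delta$-labelled frame $\mathcal Y$ is a relation $E\subseteq|\mathcal X|\times|\mathcal Y|$ that is forward-confluent (if $x\,E\,y$ and $x\preccurlyeq x'$ then there is $y'\succcurlyeq y$ with $x'\,E\,y'$) and such that $x\,E\,y$ implies $\ell_{\mathcal X}(x)\subseteq_T\ell_{\mathcal Y}(y)$. We write $(\mathcal X,x)\rightharpoonup(\mathcal Y,y)$ if some simulation $E$ has $x\,E\,y$. For a finite $\Sigma$-labelled frame $\mathcal W$ and $w\in|\mathcal W|$, the formula $\mathrm{Sim}(w)$ is defined by backwards induction on the strict order $\prec$ of $\mathcal W$: $\mathrm{Sim}(w)=\bigwedge\ell^+(w)\to\big(\bigvee\ell^-(w)\vee\bigvee_{v\succ w}\mathrm{Sim}(v)\big)$, with $\bigwedge\varnothing=\top$, $\bigvee\varnothing=\bot$. (Here $\ell^{\pm}(w)$ are finite as $\Sigma$ is finite; the formula $\mathrm{Sim}(w)$ is assumed to belong to $\Delta$ when evaluated against $\ell_{\mathcal X}$.) *)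

(* Defs.v *)
From HB Require Import structures.
From mathcomp Require Import all_boot.
Set Implicit Arguments. Unset Strict Implicit. Unset Printing Implicit Defensive.

Inductive form : Type :=
| Var of nat
| Bot
| And of form & form
| Or of form & form
| Imp of form & form
| Next of form
| Dia of form.

Definition form_eq_dec (a b : form) : {a = b} + {a <> b}.
Proof. decide equality; decide equality. Defined.

Definition form_eqb (a b : form) : bool := if form_eq_dec a b then true else false.
Lemma form_eqP : Equality.axiom form_eqb.
Proof. move=> a b; rewrite /form_eqb; case: form_eq_dec => h; [left|right]; done. Qed.
HB.instance Definition _ := hasDecEq.Build form form_eqP.

Definition Top : form := Imp Bot Bot.

Fixpoint bigAnd (s : seq form) : form :=
  match s with
  | [::] => Top
  | [:: a] => a
  | a :: s' => And a (bigAnd s')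
  end.
Fixpoint bigOr (s : seq form) : form :=
  match s with
  | [::] => Bot
  | [:: a] => a
  | a :: s' => Or a (bigOr s')
  end.

(* closure under (immediate, hence all) subformulas *)
Definition subf_closed (S : form -> Prop) : Prop :=
  (forall a b, S (And a b) -> S a /\ S b) /\
  (forall a b, S (Or a b) -> S a /\ S b) /\
  (forall a b, S (Imp a b) -> S a /\ S b) /\
  (forall a, S (Next a) -> S a) /\
  (forall a, S (Dia a) -> S a).

Definition is_type (S : form -> Prop) (m p : form -> Prop) : Prop :=
  (forall f, ~ (m f /\ p f)) /\
  (forall f, S f <-> (m f \/ p f)) /\
  ~ p Bot /\
  (forall a b, S (And a b) -> (p (And a b) <-> p a /\ p b)) /\
  (forall a b, S (Or a b) -> (p (Or a b) <-> p a \/ p b)) /\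
  (forall a b, p (Imp a b) -> m a \/ p b) /\
  (forall a, m (Dia a) -> m a).

(* (X, le, l) with l(x) = (m x ; p x) is an S-labelled frame *)
Definition is_lframe (S : form -> Prop) (X : Type) (le : X -> X -> Prop)
  (m p : X -> form -> Prop) : Prop :=
  (forall x, le x x) /\
  (forall x y z, le x y -> le y z -> le x z) /\
  (forall x y, le x y -> le y x -> x = y) /\
  (forall x, is_type S (m x) (p x)) /\
  (forall x y, le x y -> forall f, p x f -> p y f) /\
  (forall x a b, m x (Imp a b) -> exists y, le x y /\ p y a /\ m y b).

Definition is_simulation (X Y : Type)
  (leX : X -> X -> Prop) (mX pX : X -> form -> Prop)
  (leY : Y -> Y -> Prop) (mY pY : Y -> form -> Prop)
  (E : X -> Y -> Prop) : Prop :=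
  (forall x y x', E x y -> leX x x' -> exists y', leY y y' /\ E x' y') /\
  (forall x y, E x y -> (forall f, mX x f -> mY y f) /\ (forall f, pX x f -> pY y f)).

Definition simulates (X Y : Type)
  (leX : X -> X -> Prop) (mX pX : X -> form -> Prop)
  (leY : Y -> Y -> Prop) (mY pY : Y -> form -> Prop) (x : X) (y : Y) : Prop :=
  exists E, is_simulation leX mX pX leY mY pY E /\ E x y.

(* Finite Sigma-labelled frame W: Sigma given as a finite list, label of w
   given by its positive part lp w (a boolean predicate); the negative part
   is Sigma minus the positive part. *)
Definition lminusW (Sig : seq form) (W : Type) (lp : W -> pred form) (w : W) (f : form) : Prop :=
  (f \in Sig) && ~~ lp w f.
Definition lplusW (W : Type) (lp : W -> pred form) (w : W) (f : form) : Prop := lp w f.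

(* Sim(w), by backwards induction on the strict order; the fuel #|W| is
   always sufficient since strict chains in W have at most #|W| elements. *)
Fixpoint SimF (Sig : seq form) (W : finType) (le : rel W) (lp : W -> pred form)
  (n : nat) (w : W) : form :=
  match n with
  | 0 => Bot
  | n'.+1 =>
      Imp (bigAnd [seq f <- Sig | lp w f])
          (Or (bigOr [seq f <- Sig | ~~ lp w f])
              (bigOr [seq SimF Sig le lp n' v | v <- enum W & le w v && (v != w)]))
  end.

Definition Sim (Sig : seq form) (W : finType) (le : rel W) (lp : W -> pred form) (w : W) : form :=
  SimF Sig le lp #|W| w.

(* Main.v *)
Require Import Defs.
From mathcomp Require Import all_boot.

Lemma sub_And {D : form -> Prop} (hD : subf_closed D) {a b} : D (And a b) -> D a /\ D b.
Proof. by case: hD => h _; apply: h. Qed.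
Lemma sub_Or {D : form -> Prop} (hD : subf_closed D) {a b} : D (Or a b) -> D a /\ D b.
Proof. by case: hD => _ [h _]; apply: h. Qed.
Lemma sub_Imp {D : form -> Prop} (hD : subf_closed D) {a b} : D (Imp a b) -> D a /\ D b.
Proof. by case: hD => _ [_ [h _]]; apply: h. Qed.

Lemma sub_bigAnd {D : form -> Prop} (hD : subf_closed D) s :
  D (bigAnd s) -> forall f, f \in s -> D f.
Proof.
elim: s => [|a s IH] //=.
case: s IH => [|b s] IH.
  by move=> Ha f; rewrite inE => /eqP ->.
move=> /(sub_And hD) [Ha Hs] f; rewrite in_cons => /orP [/eqP -> //|]; exact: IH.
Qed.

Lemma sub_bigOr {D : form -> Prop} (hD : subf_closed D) s :
  D (bigOr s) -> forall f, f \in s -> D f.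
Proof.
elim: s => [|a s IH] //=.
case: s IH => [|b s] IH.
  by move=> Ha f; rewrite inE => /eqP ->.
move=> /(sub_Or hD) [Ha Hs] f; rewrite in_cons => /orP [/eqP -> //|]; exact: IH.
Qed.


Lemma fr_mp {D : form -> Prop} {X : Type} {leX : X -> X -> Prop} {mX pX : X -> form -> Prop}
  (hX : is_lframe D leX mX pX) x {f} : D f -> mX x f \/ pX x f.
Proof. case: hX => _ [_ [_ [ht _]]]; case: (ht x) => _ [hc _]; by move/hc. Qed.
Lemma fr_disj {D : form -> Prop} {X : Type} {leX : X -> X -> Prop} {mX pX : X -> form -> Prop}
  (hX : is_lframe D leX mX pX) x {f} : mX x f -> pX x f -> False.
Proof. case: hX => _ [_ [_ [ht _]]]; case: (ht x) => hd _ a b; exact: (hd f). Qed.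
Lemma fr_D {D : form -> Prop} {X : Type} {leX : X -> X -> Prop} {mX pX : X -> form -> Prop}
  (hX : is_lframe D leX mX pX) x {f} : mX x f \/ pX x f -> D f.
Proof. case: hX => _ [_ [_ [ht _]]]; case: (ht x) => _ [hc _]; by move/hc. Qed.
Lemma fr_bot {D : form -> Prop} {X : Type} {leX : X -> X -> Prop} {mX pX : X -> form -> Prop}
  (hX : is_lframe D leX mX pX) x : ~ pX x Bot.
Proof. case: hX => _ [_ [_ [ht _]]]; by case: (ht x) => _ [_ [h _]]. Qed.

Lemma fr_bigAnd {D : form -> Prop} (hD : subf_closed D) {X : Type} {leX : X -> X -> Prop}
  {mX pX : X -> form -> Prop} (hX : is_lframe D leX mX pX) x s :
  D (bigAnd s) -> (pX x (bigAnd s) <-> forall f, f \in s -> pX x f).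
Proof.
elim: s => [|a s IH] /=.
  move=> HT; split=> // _.
  case: (fr_mp hX x HT) => // hm.
  have [_ [_ [_ [_ [_ hI]]]]] := hX.
  by case: (hI _ _ _ hm) => y [_ [hb _]]; case: (fr_bot hX _ hb).
case: s IH => [|b s] IH.
  move=> Ha; split; first by move=> h f; rewrite inE => /eqP ->.
  by apply; rewrite inE.
move=> HD; have [Ha Hs] := sub_And hD HD.
have [_ [_ [_ [ht _]]]] := hX; case: (ht x) => _ [_ [_ [hand _]]].
have [h1 h2] := hand _ _ HD; have [i1 i2] := IH Hs; split.
  move/h1=> [pa /i1 ps] f; rewrite in_cons => /orP [/eqP -> //|]; apply: ps.
move=> h; apply: h2; split; first by apply: h; rewrite inE eqxx.
by apply: i2 => f fi; apply: h; rewrite in_cons fi orbT.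
Qed.

Lemma fr_bigOr {D : form -> Prop} (hD : subf_closed D) {X : Type} {leX : X -> X -> Prop}
  {mX pX : X -> form -> Prop} (hX : is_lframe D leX mX pX) x s :
  D (bigOr s) -> (pX x (bigOr s) <-> exists2 f, f \in s & pX x f).
Proof.
elim: s => [|a s IH] /=.
  move=> _; split=> [h|[f]] //; by case: (fr_bot hX _ h).
case: s IH => [|b s] IH.
  move=> Ha; split; first by exists a; rewrite ?inE.
  by case=> f; rewrite inE => /eqP ->.
move=> HD; have [Ha Hs] := sub_Or hD HD.
have [_ [_ [_ [ht _]]]] := hX; case: (ht x) => _ [_ [_ [_ [hor _]]]].
have [h1 h2] := hor _ _ HD; have [i1 i2] := IH Hs; split.
  move/h1; case=> [pa|/i1 [f fi pf]]; first by exists a; rewrite ?inE ?eqxx.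
  by exists f; rewrite // in_cons fi orbT.
case=> f; rewrite in_cons => /orP [/eqP -> pf|fi pf]; apply: h2; first by left.
by right; apply: i2; exists f.
Qed.

Lemma fr_bigOr_m {D : form -> Prop} (hD : subf_closed D) {X : Type} {leX : X -> X -> Prop}
  {mX pX : X -> form -> Prop} (hX : is_lframe D leX mX pX) x s :
  mX x (bigOr s) -> forall f, f \in s -> mX x f.
Proof.
move=> hm f fi.
have HD : D (bigOr s) by apply: (fr_D hX x); left.
case: (fr_mp hX x (sub_bigOr hD _ HD _ fi)) => // hp.
case: (fr_disj hX _ hm); apply: (proj2 (fr_bigOr hD hX x s HD)); by exists f.
Qed.

Lemma up_lt (W : finType) (leW : rel W)
  (htr : forall x y z, leW x y -> leW y z -> leW x z)
  (han : forall x y, leW x y -> leW y x -> x = y) w v :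
  leW w v -> v != w ->
  #|[set u | leW v u && (u != v)]| < #|[set u | leW w u && (u != w)]|.
Proof.
move=> hwv ne; apply: proper_card; apply/properP; split.
  apply/subsetP => u; rewrite !inE => /andP [hvu nuv].
  rewrite (htr _ _ _ hwv hvu) /=; apply/eqP => euw; subst u.
  by move: nuv; rewrite (han _ _ hvu hwv) eqxx.
exists v; first by rewrite !inE hwv ne.
by rewrite !inE eqxx andbF.
Qed.

Lemma up_card (W : finType) (leW : rel W) w :
  #|[set u | leW w u && (u != w)]| < #|W|.
Proof.
rewrite -cardsT; apply: proper_card; apply/properP; split; first exact: subsetT.
by exists w; rewrite !inE ?eqxx ?andbF.
Qed.

Lemma part2 (Sig : seq form) (W : finType) (leW : rel W) (lpW : W -> pred form)
  {D : form -> Prop} (hD : subf_closed D) {X : Type} {leX : X -> X -> Prop}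
  {mX pX : X -> form -> Prop} (hX : is_lframe D leX mX pX) n :
  forall w y, simulates (fun a b => leW a b) (lminusW Sig lpW) (lplusW lpW) leX mX pX w y ->
  forall x, leX x y -> ~ pX x (SimF Sig leW lpW n w).
Proof.
elim: n => [|n IH] w y [E [[Hc Hl] Ewy]] x Hxy /=.
  exact: fr_bot hX x.
move=> Hp.
have [_ [_ [_ [ht [mono hI]]]]] := hX.
have Hpy := mono _ _ Hxy _ Hp.
have HD := fr_D hX y (or_intror Hpy).
have [DA DB] := sub_Imp hD HD.
have HA : pX y (bigAnd [seq f <- Sig | lpW w f]).
  apply: (proj2 (fr_bigAnd hD hX y _ DA)) => f; rewrite mem_filter => /andP [lf _].
  exact: (proj2 (Hl _ _ Ewy)).
case: (ht y) => _ [_ [_ [_ [hor [himp _]]]]].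
case: (himp _ _ Hpy) => [hm|hB]; first exact: (fr_disj hX _ hm HA).
have [DL DR] := sub_Or hD DB.
case: (proj1 (hor _ _ DB) hB) => [hL|hR].
  case: (proj1 (fr_bigOr hD hX y _ DL) hL) => f; rewrite mem_filter => /andP [nl fS] pf.
  apply: (fr_disj hX _ _ pf); apply: (proj1 (Hl _ _ Ewy)).
  by rewrite /lminusW fS nl.
case: (proj1 (fr_bigOr hD hX y _ DR) hR) => f /mapP [v].
rewrite mem_filter => /andP [/andP [lwv _] _] -> pf.
have [y' [hyy' Ev]] := Hc _ _ _ Ewy lwv.
apply: (IH v y' _ y hyy' pf).
by exists E.
Qed.

Lemma part1 (Sig : seq form) (W : finType) (leW : rel W) (lpW : W -> pred form)
  (hW : is_lframe (fun f => f \in Sig) (fun a b => leW a b) (lminusW Sig lpW) (lplusW lpW))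
  {D : form -> Prop} (hD : subf_closed D) {X : Type} {leX : X -> X -> Prop}
  {mX pX : X -> form -> Prop} (hX : is_lframe D leX mX pX) n :
  forall w, #|[set u | leW w u && (u != w)]| < n ->
  forall x, mX x (SimF Sig leW lpW n w) ->
  exists y, leX x y /\
    simulates (fun a b => leW a b) (lminusW Sig lpW) (lplusW lpW) leX mX pX w y.
Proof.
have [_ [htrW [hanW [htW _]]]] := hW.
elim: n => [|n IH] w // Hn x /= hm.
have [hrefl [_ [_ [ht [mono hI]]]]] := hX.
have [y [hxy [hA hB]]] := hI _ _ _ hm.
have HD := fr_D hX x (or_introl hm).
have [DA DB] := sub_Imp hD HD.
have [DL DR] := sub_Or hD DB.
have [_ [_ [_ [_ [hor _]]]]] := ht y.
have mL : mX y (bigOr [seq f <- Sig | ~~ lpW w f]).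
  case: (fr_mp hX y DL) => // pL; case: (fr_disj hX _ hB).
  by apply: (proj2 (hor _ _ DB)); left.
have mR : mX y (bigOr [seq SimF Sig leW lpW n v | v <- enum W & leW w v && (v != w)]).
  case: (fr_mp hX y DR) => // pR; case: (fr_disj hX _ hB).
  by apply: (proj2 (hor _ _ DB)); right.
exists y; split => //.
exists (fun a b => (a = w /\ b = y) \/
  simulates (fun a b => leW a b) (lminusW Sig lpW) (lplusW lpW) leX mX pX a b).
split; last by left.
split.
  move=> a b a' [[-> ->]|[E [[Hc Hl] Eab]]] haa'.
    case: (eqVneq a' w) => [->|ne]; first by exists y; split; [apply: hrefl|left].
    have lt : #|[set u | leW a' u && (u != a')]| < n.
      have := up_lt _ _ htrW hanW _ _ haa' ne; rewrite ltnS in Hn.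
      move=> h; exact: leq_trans h Hn.
    have hma' : mX y (SimF Sig leW lpW n a').
      apply: (fr_bigOr_m hD hX y _ mR); apply: map_f.
      by rewrite mem_filter mem_enum haa' ne.
    have [z [hyz sz]] := IH a' lt y hma'.
    by exists z; split => //; right.
  have [b' [hbb' E']] := Hc _ _ _ Eab haa'.
  by exists b'; split => //; right; exists E; split => //; split.
move=> a b [[-> ->]|[E [[Hc Hl] Eab]]]; last exact: Hl.
split=> f hf.
  apply: (fr_bigOr_m hD hX y _ mL).
  by move: hf; rewrite /lminusW mem_filter andbC.
apply: (proj1 (fr_bigAnd hD hX y _ DA) hA).
have [_ [hc _]] := htW w.
have fS : f \in Sig by apply/hc; right.
by rewrite mem_filter fS andbT.
Qed.

Theorem propositionB2
  (Sig : seq form) (Delta : form -> Prop)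
  (hSig : subf_closed (fun f => f \in Sig))
  (hDelta : subf_closed Delta)
  (hSD : forall f, f \in Sig -> Delta f)
  (W : finType) (leW : rel W) (lpW : W -> pred form)
  (hW : is_lframe (fun f => f \in Sig) (fun a b => leW a b) (lminusW Sig lpW) (lplusW lpW))
  (X : Type) (leX : X -> X -> Prop) (mX pX : X -> form -> Prop)
  (hX : is_lframe Delta leX mX pX)
  (w : W) (x : X) :
  (mX x (Sim Sig leW lpW w) ->
     exists y, leX x y /\
       simulates (fun a b => leW a b) (lminusW Sig lpW) (lplusW lpW) leX mX pX w y) /\
  ((exists y, leX x y /\
       simulates (fun a b => leW a b) (lminusW Sig lpW) (lplusW lpW) leX mX pX w y) ->
     ~ pX x (Sim Sig leW lpW w)) /\
  ((forall f, Delta f) ->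
     (mX x (Sim Sig leW lpW w) <->
      exists y, leX x y /\
        simulates (fun a b => leW a b) (lminusW Sig lpW) (lplusW lpW) leX mX pX w y)).
Proof.
have P1 : mX x (Sim Sig leW lpW w) ->
     exists y, leX x y /\
       simulates (fun a b => leW a b) (lminusW Sig lpW) (lplusW lpW) leX mX pX w y.
  exact: (@part1 Sig W leW lpW hW _ hDelta _ _ _ _ hX #|W| w (up_card W leW w) x).
have P2 : (exists y, leX x y /\
       simulates (fun a b => leW a b) (lminusW Sig lpW) (lplusW lpW) leX mX pX w y) ->
     ~ pX x (Sim Sig leW lpW w).
  by move=> [y [hxy hs]]; exact: (@part2 Sig W leW lpW _ hDelta _ _ _ _ hX #|W| w y hs x hxy).
split => //; split => // hall; split => // ex.
case: (fr_mp hX x (hall (Sim Sig leW lpW w))) => // hp.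
by case: (P2 ex hp).
Qed.
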